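(* Let $d\in\mathbb{N}$ and $(d_1,d_2)\in\mathbb{N}^2$. Then $$E_d=\{m+n\gamma^{-1}\ge0:\ m,n\in\mathbb{Z},\ |m|+|n|\le d\},\qquad E_{(d_1,d_2)}=\{m+n\gamma^{-1}\ge0:\ m,n\in\mathbb{Z},\ |m|\le d_1,\ |n|\le d_2\},$$ and $|E_d|=d^2+d+1$, $|E_{(d_1,d_2)}|=2d_1d_2+d_1+d_2+1$.
   Context: Let $f\colon\mathbb{Z}\to\mathbb{Z}$ be defined by $f(0)=f(1)=1$, $f(i+2)=f(i+1)+f(i)$ for all $i\in\mathbb{Z}$; $\gamma=(1+\sqrt5)/2$; $\mathbb{Z}[\gamma]=\mathbb{Z}\oplus\mathbb{Z}\gamma^{-1}$. For $d\in\mathbb{N}$, $E_d$ is the set of $\alpha\in\mathbb{Z}[\gamma]$ such that $\alpha=\sum_{k=1}^s\gamma^{-i_k}$ and $\sum_{k=1}^sf(i_k)\le d$ for some $s\in\mathbb{N}$ and integers $0\le i_1\le\dots\le i_s$ (empty sum $=0$). For $(d_1,d_2)\in\mathbb{N}^2$, $E_{(d_1,d_2)}$ is the set of $\alpha\in\mathbb{Z}[\gamma]$ such that $\alpha=\sum_{k=1}^s\gamma^{-i_k}$, $\sum_kf(i_k-2)\le d_1$ and $\sum_kf(i_k-1)\le d_2$ for some such $s$ and $i_1,\dots,i_s$. *)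

(* Defs.v *)
From Stdlib Require Import Reals ZArith List Sorting.Sorted Arith.
Import ListNotations.
Open Scope R_scope.

Definition gamma : R := (1 + sqrt 5) / 2.

Definition in_Zgamma (x : R) : Prop :=
  exists m n : Z, x = IZR m + IZR n * / gamma.

Definition sum_gpow (l : list nat) : R :=
  fold_right (fun i acc => (/ gamma) ^ i + acc) 0 l.

Definition sum_Z (g : Z -> Z) (l : list nat) : Z :=
  fold_right (fun i acc => (g (Z.of_nat i) + acc)%Z) 0%Z l.

Definition E_single (f : Z -> Z) (d : nat) (x : R) : Prop :=
  in_Zgamma x /\
  exists l : list nat, Sorted le l /\ x = sum_gpow l /\
    (sum_Z f l <= Z.of_nat d)%Z.

Definition E_pair (f : Z -> Z) (d1 d2 : nat) (x : R) : Prop :=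
  in_Zgamma x /\
  exists l : list nat, Sorted le l /\ x = sum_gpow l /\
    (sum_Z (fun i => f (i - 2)%Z) l <= Z.of_nat d1)%Z /\
    (sum_Z (fun i => f (i - 1)%Z) l <= Z.of_nat d2)%Z.

Definition card_is (P : R -> Prop) (k : nat) : Prop :=
  exists s : list R, NoDup s /\ length s = k /\ forall x, In x s <-> P x.

(* Main.v *)
Require Import Defs.
From Stdlib Require Import Reals ZArith List Sorting.Sorted Arith Lia Lra Psatz.
Open Scope R_scope.

Definition psi : R := / gamma.
Definition V (m n : Z) : R := IZR m + IZR n * psi.

Lemma sqrt5_bounds : 2 < sqrt 5 < 3.
Proof.
  split.
  - rewrite <- (sqrt_square 2) by lra. apply sqrt_lt_1; lra.
  - rewrite <- (sqrt_square 3) by lra. apply sqrt_lt_1; lra.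
Qed.

Lemma gamma_sq : gamma * gamma = gamma + 1.
Proof.
  unfold gamma. pose proof (sqrt_sqrt 5 ltac:(lra)). nra.
Qed.

Lemma gamma_bounds : 1 < gamma < 2.
Proof. unfold gamma. pose proof sqrt5_bounds. lra. Qed.

Lemma psi_gamma : psi * gamma = 1.
Proof. unfold psi. pose proof gamma_bounds. field. lra. Qed.

Lemma gamma_psi : gamma = 1 + psi.
Proof.
  pose proof gamma_sq. pose proof psi_gamma. pose proof gamma_bounds.
  assert (psi = gamma - 1); [|lra].
  apply (Rmult_eq_reg_r gamma); [|lra]. nra.
Qed.

Lemma psi_sq : psi * psi = 1 - psi.
Proof.
  pose proof gamma_psi. pose proof psi_gamma. rewrite H in H0. nra.
Qed.

Lemma psi_bounds : 0 < psi < 1.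
Proof. pose proof gamma_psi. pose proof gamma_bounds. lra. Qed.

Lemma descent : forall k : nat, forall m n : Z,
  (Z.abs m + Z.abs n <= Z.of_nat k)%Z -> (m*m - m*n - n*n = 0)%Z -> m = 0%Z /\ n = 0%Z.
Proof.
  induction k; intros m n Hk H.
  - lia.
  - destruct (Z.eq_dec m 0); destruct (Z.eq_dec n 0).
    + lia.
    + subst. assert (n*n = 0)%Z by lia. apply Z.mul_eq_0 in H0. lia.
    + subst. assert (m*m = 0)%Z by lia. apply Z.mul_eq_0 in H0. lia.
    + assert (Hm : (m = 2 * (m / 2))%Z /\ (n = 2 * (n / 2))%Z).
      { pose proof (Z.div_mod m 2 ltac:(lia)). pose proof (Z.div_mod n 2 ltac:(lia)).
        pose proof (Z.mod_pos_bound m 2 ltac:(lia)). pose proof (Z.mod_pos_bound n 2 ltac:(lia)).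
        set (a := (m/2)%Z) in *. set (b := (n/2)%Z) in *.
        set (r := (m mod 2)%Z) in *. set (s := (n mod 2)%Z) in *.
        assert (r = 0 \/ r = 1)%Z by lia. assert (s = 0 \/ s = 1)%Z by lia.
        destruct H4, H5; subst r s; split; try lia; rewrite H0, H1 in H; ring_simplify in H; lia. }
      destruct Hm as [Hm Hn].
      destruct (IHk (m/2)%Z (n/2)%Z); try lia.
Qed.

Lemma V_zero : forall m n, V m n = 0 -> m = 0%Z /\ n = 0%Z.
Proof.
  intros m n H. unfold V in H.
  pose proof psi_gamma. pose proof gamma_sq. pose proof gamma_bounds.
  assert (H3 : IZR m * gamma + IZR n = 0).
  { replace (IZR m * gamma + IZR n) with ((IZR m + IZR n * psi) * gamma) by (rewrite Rmult_plus_distr_r, Rmult_assoc, H0; ring).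
    rewrite H; ring. }
  assert (H4 : IZR (m*m - m*n - n*n) = 0).
  { rewrite minus_IZR, minus_IZR, !mult_IZR.
    assert (IZR n = - IZR m * gamma) by lra. rewrite H4.
    replace (IZR m * IZR m - IZR m * (- IZR m * gamma) - - IZR m * gamma * (- IZR m * gamma))
      with (IZR m * IZR m * (1 + gamma - gamma * gamma)) by ring.
    rewrite H1. ring. }
  apply eq_IZR in H4.
  apply (descent (Z.to_nat (Z.abs m + Z.abs n))); lia.
Qed.

Lemma V_add : forall a b c d, V a b + V c d = V (a + c) (b + d).
Proof. intros. unfold V. rewrite !plus_IZR. ring. Qed.
Lemma V_opp : forall a b, - V a b = V (-a) (-b).
Proof. intros. unfold V. rewrite !opp_IZR. ring. Qed.
Lemma V_inj : forall a b c d, V a b = V c d -> a = c /\ b = d.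
Proof.
  intros. assert (V (a + - c) (b + - d) = 0).
  { rewrite <- V_add, <- V_opp. lra. }
  apply V_zero in H0. lia.
Qed.

Definition fib_like (f : Z -> Z) : Prop :=
  f 0%Z = 1%Z /\ f 1%Z = 1%Z /\ forall i : Z, f (i + 2)%Z = (f (i + 1)%Z + f i)%Z.

Section F.
Context (f : Z -> Z) (Hf : fib_like f).

Lemma f_m1 : f (-1)%Z = 0%Z.
Proof. destruct Hf as [h0 [h1 hr]]. specialize (hr (-1)%Z). simpl in hr. lia. Qed.
Lemma f_m2 : f (-2)%Z = 1%Z.
Proof. destruct Hf as [h0 [h1 hr]]. pose proof f_m1. specialize (hr (-2)%Z). simpl in hr. lia. Qed.
Lemma f_rec : forall z, f z = (f (z - 1) + f (z - 2))%Z.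
Proof. destruct Hf as [h0 [h1 hr]]. intro z. specialize (hr (z-2)%Z).
  replace (z - 2 + 2)%Z with z in hr by lia. replace (z - 2 + 1)%Z with (z-1)%Z in hr by lia. lia. Qed.
Lemma f_nonneg : forall i : nat, (0 <= f (Z.of_nat i - 2) /\ 0 <= f (Z.of_nat i - 1))%Z.
Proof.
  pose proof f_m1; pose proof f_m2.
  induction i.
  - simpl. lia.
  - rewrite Nat2Z.inj_succ. replace (Z.succ (Z.of_nat i) - 2)%Z with (Z.of_nat i - 1)%Z by lia.
    replace (Z.succ (Z.of_nat i) - 1)%Z with (Z.of_nat i)%Z by lia.
    rewrite (f_rec (Z.of_nat i)). lia.
Qed.
End F.

Lemma sum_Z_cons : forall g a l, sum_Z g (a :: l) = (g (Z.of_nat a) + sum_Z g l)%Z.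
Proof. reflexivity. Qed.
Lemma sum_Z_nil : forall g, sum_Z g nil = 0%Z.
Proof. reflexivity. Qed.
Lemma sum_gpow_cons : forall a l, sum_gpow (a :: l) = (/ gamma) ^ a + sum_gpow l.
Proof. reflexivity. Qed.
Lemma sum_gpow_nil : sum_gpow nil = 0.
Proof. reflexivity. Qed.
Lemma sum_Z_app : forall g l1 l2, sum_Z g (l1 ++ l2) = (sum_Z g l1 + sum_Z g l2)%Z.
Proof. induction l1; intros; simpl app; rewrite ?sum_Z_nil, ?sum_Z_cons; [lia|]. rewrite IHl1. lia. Qed.
Lemma sum_Z_repeat : forall g i c, sum_Z g (repeat i c) = (Z.of_nat c * g (Z.of_nat i))%Z.
Proof. induction c; simpl repeat; rewrite ?sum_Z_nil, ?sum_Z_cons; [lia|]. rewrite IHc. lia. Qed.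
Lemma sum_Z_add : forall g h l, sum_Z (fun z => g z + h z)%Z l = (sum_Z g l + sum_Z h l)%Z.
Proof. induction l; rewrite ?sum_Z_nil, ?sum_Z_cons; lia. Qed.
Lemma sum_Z_ext : forall g h l, (forall z, g z = h z) -> sum_Z g l = sum_Z h l.
Proof. induction l; intros; rewrite ?sum_Z_nil, ?sum_Z_cons; [lia|]. rewrite H, IHl; auto. Qed.
Lemma sum_Z_shift : forall g k l, sum_Z g (map (fun i => (i + k)%nat) l) = sum_Z (fun z => g (z + Z.of_nat k)%Z) l.
Proof. induction l; simpl map; rewrite ?sum_Z_nil, ?sum_Z_cons; [lia|]. rewrite IHl, Nat2Z.inj_add. lia. Qed.

Lemma sum_gpow_app : forall l1 l2, sum_gpow (l1 ++ l2) = sum_gpow l1 + sum_gpow l2.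
Proof. induction l1; intros; simpl app; rewrite ?sum_gpow_nil, ?sum_gpow_cons; [lra|]. rewrite IHl1. lra. Qed.
Lemma sum_gpow_repeat : forall i c, sum_gpow (repeat i c) = INR c * (/ gamma) ^ i.
Proof. induction c; simpl repeat; rewrite ?sum_gpow_nil, ?sum_gpow_cons; [simpl; lra|]. rewrite IHc, S_INR. lra. Qed.
Lemma sum_gpow_shift : forall k l, sum_gpow (map (fun i => (i + k)%nat) l) = psi ^ k * sum_gpow l.
Proof. induction l; simpl map; rewrite ?sum_gpow_nil, ?sum_gpow_cons; [lra|]. rewrite IHl, pow_add. unfold psi. lra. Qed.
Lemma sum_gpow_nonneg : forall l, 0 <= sum_gpow l.
Proof. pose proof psi_bounds. unfold psi in H. induction l; rewrite ?sum_gpow_nil, ?sum_gpow_cons; [lra|].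
  pose proof (pow_le (/ gamma) a ltac:(lra)). lra. Qed.

Lemma sorted_repeat : forall a e, Sorted le (repeat a e).
Proof. induction e; simpl; constructor; auto. destruct e; simpl; constructor; lia. Qed.
Lemma sorted_repeat_app : forall a b c e, (a <= b)%nat -> Sorted le (repeat a c ++ repeat b e).
Proof.
  induction c; intros; simpl.
  - apply sorted_repeat.
  - constructor. apply IHc; auto.
    destruct c; simpl; [destruct e; simpl; constructor; auto | constructor; lia].
Qed.
Lemma sorted_shift : forall k l, Sorted le l -> Sorted le (map (fun i => (i + k)%nat) l).
Proof.
  intros k l H. induction H; simpl; constructor; auto.
  destruct l; simpl; constructor. inversion H0; lia.
Qed.

Lemma IZR_to_nat : forall z, (0 <= z)%Z -> INR (Z.to_nat z) = IZR z.
Proof. intros. rewrite INR_IZR_INZ, Z2Nat.id; auto. Qed.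

Section K.
Context (f : Z -> Z) (Hf : fib_like f).
Let SA l := sum_Z (fun i => f (i - 2)%Z) l.
Let SB l := sum_Z (fun i => f (i - 1)%Z) l.

Lemma SA_shift2 : forall l, SA (map (fun i => (i + 2)%nat) l) = (SA l + SB l)%Z.
Proof.
  intros. unfold SA, SB. rewrite sum_Z_shift, <- sum_Z_add. apply sum_Z_ext. intro z.
  replace (z + Z.of_nat 2 - 2)%Z with z by lia. rewrite (f_rec f Hf z). lia.
Qed.
Lemma SB_shift2 : forall l, SB (map (fun i => (i + 2)%nat) l) = (SA l + 2 * SB l)%Z.
Proof.
  intros. unfold SA, SB. rewrite sum_Z_shift.
  replace (2 * sum_Z (fun i => f (i - 1)%Z) l)%Z with
    (sum_Z (fun i => f (i - 1)%Z) l + sum_Z (fun i => f (i - 1)%Z) l)%Z by lia.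
  rewrite <- !sum_Z_add. apply sum_Z_ext. intro z.
  replace (z + Z.of_nat 2 - 1)%Z with (z+1)%Z by lia. rewrite (f_rec f Hf (z+1)).
  replace (z + 1 - 1)%Z with z by lia. replace (z + 1 - 2)%Z with (z - 1)%Z by lia.
  rewrite (f_rec f Hf z). lia.
Qed.
Lemma SA_shift1 : forall l, SA (map (fun i => (i + 1)%nat) l) = SB l.
Proof.
  intros. unfold SA, SB. rewrite sum_Z_shift. apply sum_Z_ext. intro z.
  replace (z + Z.of_nat 1 - 2)%Z with (z - 1)%Z by lia. lia.
Qed.
Lemma SB_shift1 : forall l, SB (map (fun i => (i + 1)%nat) l) = (SA l + SB l)%Z.
Proof.
  intros. unfold SA, SB. rewrite sum_Z_shift, <- sum_Z_add. apply sum_Z_ext. intro z.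
  replace (z + Z.of_nat 1 - 1)%Z with z by lia. rewrite (f_rec f Hf z). lia.
Qed.

Lemma nonneg_case : forall m n, (0 <= m)%Z -> (0 <= n)%Z ->
  exists l, Sorted le l /\ sum_gpow l = V m n /\ SA l = m /\ SB l = n.
Proof.
  intros m n Hm Hn. exists (repeat 0%nat (Z.to_nat m) ++ repeat 1%nat (Z.to_nat n)).
  pose proof (f_m1 f Hf). pose proof (f_m2 f Hf). destruct Hf as [h0 [h1 _]].
  split; [apply sorted_repeat_app; lia|]. split; [|split].
  - rewrite sum_gpow_app, !sum_gpow_repeat, !IZR_to_nat by lia. unfold V, psi. simpl. ring.
  - unfold SA. rewrite sum_Z_app, !sum_Z_repeat. simpl. lia.
  - unfold SB. rewrite sum_Z_app, !sum_Z_repeat. simpl. lia.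
Qed.

Lemma even_case : forall k m n, (Z.to_nat m <= k)%nat -> (0 < m)%Z -> (n <= 0)%Z -> 0 <= V m n ->
  exists l, Sorted le l /\ sum_gpow l = V m n /\ SA l = m /\ SB l = (- n)%Z.
Proof.
  pose proof psi_sq as Hps. pose proof psi_bounds. pose proof gamma_psi. pose proof psi_gamma.
  pose proof gamma_bounds.
  induction k; intros m n Hk Hm Hn Hx; [lia|].
  destruct (Z_le_gt_dec 0 (m + n)) as [Hmn|Hmn].
  - exists (repeat 0%nat (Z.to_nat (m + n)) ++ repeat 2%nat (Z.to_nat (- n))).
    pose proof (f_m1 f Hf). pose proof (f_m2 f Hf). destruct Hf as [h0 [h1 _]].
    split; [apply sorted_repeat_app; lia|]. split; [|split].
    + rewrite sum_gpow_app, !sum_gpow_repeat, !IZR_to_nat by lia. unfold V. fold psi.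
      rewrite plus_IZR, opp_IZR. simpl. replace (psi * (psi * 1)) with (1 - psi) by (rewrite <- Hps; ring). ring.
    + unfold SA. rewrite sum_Z_app, !sum_Z_repeat. simpl. lia.
    + unfold SB. rewrite sum_Z_app, !sum_Z_repeat. simpl. lia.
  - assert (H3 : IZR m * gamma + IZR n >= 0).
    { unfold V in Hx. replace (IZR m * gamma + IZR n) with ((IZR m + IZR n * psi) * gamma)
        by (rewrite Rmult_plus_distr_r, Rmult_assoc, H1; ring). apply Rle_ge.
      apply Rmult_le_pos; lra. }
    assert (Hm' : (0 < 2 * m + n)%Z).
    { apply lt_IZR. rewrite plus_IZR, mult_IZR. apply IZR_lt in Hm.
      assert (0 < IZR m * (2 - gamma)) by (apply Rmult_lt_0_compat; lra). simpl. lra. }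
    assert (HV : V m n = psi ^ 2 * V (2 * m + n) (m + n)).
    { unfold V. rewrite !plus_IZR, mult_IZR. simpl.
      replace (psi * (psi * 1) * (2 * IZR m + IZR n + (IZR m + IZR n) * psi))
        with ((psi * psi) * (2 * IZR m + IZR n) + (psi * psi) * psi * (IZR m + IZR n)) by ring.
      rewrite Hps. replace ((1 - psi) * psi) with (psi - psi * psi) by ring. rewrite Hps. ring. }
    destruct (IHk (2 * m + n)%Z (m + n)%Z) as [l [Hs [Hl [Ha Hb]]]]; try lia.
    { assert (0 <= V (2 * m + n) (m + n)); [|lra].
      pose proof (pow_lt psi 2 ltac:(lra)).
      apply (Rmult_le_reg_l (psi ^ 2)); lra. }
    exists (map (fun i => (i + 2)%nat) l). split; [apply sorted_shift; auto|].
    split; [|split].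
    + rewrite sum_gpow_shift, Hl. auto.
    + rewrite SA_shift2. lia.
    + rewrite SB_shift2. lia.
Qed.

Lemma key : forall m n, 0 <= V m n ->
  exists l, Sorted le l /\ sum_gpow l = V m n /\ SA l = Z.abs m /\ SB l = Z.abs n.
Proof.
  pose proof psi_sq as Hps. pose proof psi_bounds. pose proof gamma_psi. pose proof psi_gamma.
  intros m n Hx.
  destruct (Z_lt_le_dec m 0) as [Hm|Hm].
  -
    assert (Hn : (0 < n)%Z).
    { apply lt_IZR. apply IZR_lt in Hm. unfold V in Hx.
      destruct (Rle_dec (IZR n) 0); [|lra]. assert (IZR n * psi <= 0) by nra. lra. }
    assert (HV : V m n = psi * V (m + n) m).
    { unfold V. rewrite plus_IZR.
      replace (psi * (IZR m + IZR n + IZR m * psi)) with (psi * (IZR m + IZR n) + psi * psi * IZR m) by ring.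
      rewrite Hps. ring. }
    assert (Hz : 0 <= V (m + n) m).
    { apply (Rmult_le_reg_l psi); lra. }
    assert (Hmn : (0 < m + n)%Z).
    { apply lt_IZR. unfold V in Hz. rewrite plus_IZR in *. apply IZR_lt in Hm.
      assert (IZR m * psi < 0) by nra. lra. }
    destruct (even_case (Z.to_nat (m + n)) (m + n) m) as [l [Hs [Hl [Ha Hb]]]]; try lia; auto.
    exists (map (fun i => (i + 1)%nat) l). split; [apply sorted_shift; auto|].
    split; [|split].
    + rewrite sum_gpow_shift, Hl, HV. simpl. ring.
    + rewrite SA_shift1. lia.
    + rewrite SB_shift1. lia.
  - destruct (Z_lt_le_dec n 0) as [Hn|Hn].
    + assert (Hm' : (0 < m)%Z).
      { destruct (Z.eq_dec m 0); [|lia]. subst. unfold V in Hx. apply IZR_lt in Hn.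
        assert (IZR n * psi < 0) by nra. simpl in Hx. lra. }
      destruct (even_case (Z.to_nat m) m n) as [l [Hs [Hl [Ha Hb]]]]; try lia; auto.
      exists l. repeat split; auto; lia.
    + destruct (nonneg_case m n) as [l [Hs [Hl [Ha Hb]]]]; auto.
      exists l. repeat split; auto; lia.
Qed.

Fixpoint coef (i : nat) : Z * Z :=
  match i with O => (1%Z, 0%Z) | S j => let (a, b) := coef j in (b, (a - b)%Z) end.

Lemma coef_spec : forall i, (/ gamma) ^ i = V (fst (coef i)) (snd (coef i)) /\
  Z.abs (fst (coef i)) = f (Z.of_nat i - 2) /\ Z.abs (snd (coef i)) = f (Z.of_nat i - 1).
Proof.
  pose proof psi_sq as Hps.
  assert (G : forall i, (/ gamma) ^ i = V (fst (coef i)) (snd (coef i)) /\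
    exists s, (s = 1 \/ s = -1)%Z /\ fst (coef i) = (s * f (Z.of_nat i - 2))%Z /\
      snd (coef i) = (- s * f (Z.of_nat i - 1))%Z).
  { induction i.
    - simpl. split. { unfold V. simpl. ring. } exists 1%Z. rewrite (f_m1 f Hf), (f_m2 f Hf). lia.
    - destruct IHi as [H1 [s [Hs [Ha Hb]]]]. cbn [coef]. destruct (coef i) as [a b]. cbn [fst snd] in *.
      split.
      + rewrite <- tech_pow_Rmult, H1. unfold V. fold psi. rewrite minus_IZR.
        replace (psi * (IZR a + IZR b * psi)) with (psi * IZR a + psi * psi * IZR b) by ring.
        rewrite Hps. ring.
      + exists (- s)%Z. split; [lia|]. rewrite Nat2Z.inj_succ.
        replace (Z.succ (Z.of_nat i) - 2)%Z with (Z.of_nat i - 1)%Z by lia.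
        replace (Z.succ (Z.of_nat i) - 1)%Z with (Z.of_nat i)%Z by lia.
        rewrite (f_rec f Hf (Z.of_nat i)). split; subst a b; ring. }
  intro i. destruct (G i) as [H1 [s [Hs [Ha Hb]]]]. destruct (f_nonneg f Hf i).
  split; auto. rewrite Ha, Hb. destruct Hs; subst; lia.
Qed.

Lemma converse : forall l, exists M N, sum_gpow l = V M N /\
  (Z.abs M <= SA l)%Z /\ (Z.abs N <= SB l)%Z.
Proof.
  induction l.
  - exists 0%Z, 0%Z. unfold V, SA, SB. rewrite sum_gpow_nil, !sum_Z_nil. split; [simpl; ring| lia].
  - destruct IHl as [M [N [H1 [H2 H3]]]]. destruct (coef_spec a) as [E [Ea Eb]].
    exists (fst (coef a) + M)%Z, (snd (coef a) + N)%Z.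
    unfold SA, SB in *. rewrite sum_gpow_cons, !sum_Z_cons, E, H1, V_add.
    split; auto. lia.
Qed.
End K.

Definition range (a : Z) (len : nat) : list Z := map (fun k => (a + Z.of_nat k)%Z) (seq 0 len).

Lemma in_range : forall a len z, In z (range a len) <-> (a <= z < a + Z.of_nat len)%Z.
Proof.
  intros. unfold range. rewrite in_map_iff. split.
  - intros [k [Hk Hin]]. apply in_seq in Hin. lia.
  - intros H. exists (Z.to_nat (z - a)). rewrite in_seq. lia.
Qed.

Lemma nodup_map_inj : forall (A B : Type) (g : A -> B) l,
  (forall x y, g x = g y -> x = y) -> NoDup l -> NoDup (map g l).
Proof. intros. apply NoDup_map_NoDup_ForallPairs; auto. intros x y _ _. auto. Qed.

Lemma range_nodup : forall a len, NoDup (range a len).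
Proof. intros. apply nodup_map_inj; [intros; lia | apply seq_NoDup]. Qed.

Lemma nodup_flat_map : forall (A B : Type) (g : A -> list B) l,
  NoDup l -> (forall x, In x l -> NoDup (g x)) ->
  (forall x y z, In x l -> In y l -> In z (g x) -> In z (g y) -> x = y) ->
  NoDup (flat_map g l).
Proof.
  induction l; intros Hl Hg Hd; simpl; [constructor|].
  inversion Hl; subst. apply NoDup_app.
  - apply Hg; simpl; auto.
  - apply IHl; auto. + intros; apply Hg; simpl; auto. + intros; eapply Hd; simpl; eauto.
  - intros z Hz Hz'. apply in_flat_map in Hz'. destruct Hz' as [y [Hy Hzy]].
    assert (a = y) by (eapply Hd; simpl; eauto). subst. contradiction.
Qed.

Definition card_is_ext : forall P Q k, card_is P k -> (forall x, P x <-> Q x) -> card_is Q k.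
Proof. intros P Q k [s [H1 [H2 H3]]] H. exists s. repeat split; auto; intro; [apply H, H3 | apply H3, H]; auto. Qed.

Section G.
Context (w : nat -> nat) (D : nat).

Definition Region (m n : Z) : Prop :=
  (Z.abs n <= Z.of_nat D)%Z /\ (Z.abs m <= Z.of_nat (w (Z.to_nat (Z.abs n))))%Z.

Definition Hrow (j : nat) : list (Z * Z) :=
  map (fun m => (m, Z.of_nat j)) (range (- Z.of_nat (w j)) (2 * w j + 1)).

Definition Hl : list (Z * Z) :=
  map (fun m => (m, 0%Z)) (range 1 (w 0)) ++ flat_map Hrow (seq 1 D).

Lemma in_Hl : forall m n, In (m, n) Hl <-> Region m n /\ ((0 < n)%Z \/ (n = 0 /\ 0 < m)%Z).
Proof.
  intros m n. unfold Hl, Region. rewrite in_app_iff, in_flat_map, in_map_iff. split.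
  - intros [[m' [E Hin]] | [j [Hj Hin]]].
    + inversion E; subst. apply in_range in Hin. simpl. lia.
    + unfold Hrow in Hin. apply in_map_iff in Hin. destruct Hin as [m' [E Hin]].
      inversion E; subst. apply in_range in Hin. apply in_seq in Hj.
      replace (Z.to_nat (Z.abs (Z.of_nat j))) with j by lia. lia.
  - intros [[H1 H2] H3]. destruct H3 as [H3 | [H3 H4]].
    + right. exists (Z.to_nat n). rewrite in_seq. split; [lia|].
      unfold Hrow. apply in_map_iff. exists m. rewrite Z2Nat.id by lia. split; auto.
      apply in_range. replace (Z.to_nat n) with (Z.to_nat (Z.abs n)) by lia. lia.
    + left. subst. exists m. split; auto. apply in_range. simpl in H2. lia.
Qed.

Lemma Hl_nodup : NoDup Hl.
Proof.
  unfold Hl. apply NoDup_app.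
  - apply nodup_map_inj; [intros x y E; inversion E; auto | apply range_nodup].
  - apply nodup_flat_map; [apply seq_NoDup | |].
    + intros. unfold Hrow. apply nodup_map_inj; [intros x' y E; inversion E; auto | apply range_nodup].
    + intros x y [m n] Hx Hy Hzx Hzy. unfold Hrow in *. apply in_map_iff in Hzx, Hzy.
      destruct Hzx as [? [E1 _]]. destruct Hzy as [? [E2 _]]. inversion E1. inversion E2. lia.
  - intros [m n] H1 H2. apply in_map_iff in H1. destruct H1 as [? [E _]]. inversion E; subst.
    apply in_flat_map in H2. destruct H2 as [j [Hj H2]]. apply in_seq in Hj.
    unfold Hrow in H2. apply in_map_iff in H2. destruct H2 as [? [E' _]]. inversion E'. lia.
Qed.

Definition slist : list R := 0 :: map (fun p => Rabs (V (fst p) (snd p))) Hl.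

Lemma Region_opp : forall m n, Region m n -> Region (-m) (-n).
Proof. unfold Region. intros. rewrite !Z.abs_opp. auto. Qed.

Lemma generic_card : card_is (fun x => exists m n, x = V m n /\ 0 <= x /\ Region m n) (S (length Hl)).
Proof.
  exists slist. split; [|split].
  - constructor.
    + intro H. apply in_map_iff in H. destruct H as [[m n] [E Hin]]. simpl in E.
      assert (V m n = 0) by (destruct (Rcase_abs (V m n)); [rewrite Rabs_left in E | rewrite Rabs_right in E]; lra).
      apply V_zero in H. apply in_Hl in Hin. lia.
    + apply NoDup_map_NoDup_ForallPairs; [|apply Hl_nodup].
      intros [m n] [m' n'] H1 H2 E. simpl in E. apply in_Hl in H1, H2.
      assert (V m n = V m' n' \/ V m n = - V m' n').
      { destruct (Rcase_abs (V m n)); [rewrite (Rabs_left (V m n)) in E | rewrite (Rabs_right (V m n)) in E]; auto;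
        (destruct (Rcase_abs (V m' n')); [rewrite (Rabs_left (V m' n')) in E | rewrite (Rabs_right (V m' n')) in E]; auto); lra. }
      destruct H as [H|H].
      * apply V_inj in H. destruct H; subst; auto.
      * rewrite V_opp in H. apply V_inj in H. lia.
  - simpl. rewrite length_map. auto.
  - intro x. unfold slist. simpl. rewrite in_map_iff. split.
    + intros [H | [[m n] [E Hin]]].
      * subst. exists 0%Z, 0%Z. unfold V, Region. simpl. split; [ring|]. split; [lra|lia].
      * apply in_Hl in Hin. destruct Hin as [HR _]. simpl in E.
        destruct (Rcase_abs (V m n)).
        -- rewrite Rabs_left in E by auto. exists (-m)%Z, (-n)%Z. rewrite <- V_opp.
           split; [lra|]. split; [lra|]. apply Region_opp; auto.
        -- rewrite Rabs_right in E by auto. exists m, n. split; [lra|]. split; [lra|auto].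
    + intros [m [n [E [Hx HR]]]].
      destruct (Z.eq_dec m 0); destruct (Z.eq_dec n 0).
      * left. subst. unfold V. simpl. ring.
      * right. destruct (Z_lt_le_dec 0 n).
        -- exists (m, n). simpl. rewrite Rabs_right by lra. split; auto. apply in_Hl. split; auto.
        -- exists (-m, -n)%Z. simpl. rewrite <- V_opp, Rabs_Ropp, Rabs_right by lra. split; auto.
           apply in_Hl. split; [apply Region_opp; auto | lia].
      * right. destruct (Z_lt_le_dec 0 m).
        -- exists (m, n). simpl. rewrite Rabs_right by lra. split; auto. apply in_Hl. split; auto.
        -- exists (-m, -n)%Z. simpl. rewrite <- V_opp, Rabs_Ropp, Rabs_right by lra. split; auto.
           apply in_Hl. split; [apply Region_opp; auto | lia].
      * right. destruct (Z_lt_le_dec 0 n).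
        -- exists (m, n). simpl. rewrite Rabs_right by lra. split; auto. apply in_Hl. split; auto.
        -- exists (-m, -n)%Z. simpl. rewrite <- V_opp, Rabs_Ropp, Rabs_right by lra. split; auto.
           apply in_Hl. split; [apply Region_opp; auto | lia].
Qed.
End G.

Lemma sum_tri : forall k s, list_sum (map (fun n => 2 * (s + k - n) + 1)%nat (seq (S s) k)) = (k * k)%nat.
Proof.
  induction k; intros s; [reflexivity|].
  simpl seq. simpl map. simpl list_sum.
  rewrite (map_ext (fun n => 2 * (s + S k - n) + 1)%nat (fun n => 2 * (S s + k - n) + 1)%nat)
    by (intro; f_equal; f_equal; lia).
  rewrite IHk. lia.
Qed.

Lemma len_box : forall d1 d2, length (Hl (fun _ => d1) d2) = (d1 + d2 * (2 * d1 + 1))%nat.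
Proof.
  intros. unfold Hl. rewrite length_app, length_map. unfold range. rewrite length_map, length_seq.
  rewrite (flat_map_constant_length (c := (2 * d1 + 1)%nat)), length_seq; auto.
  intros. unfold Hrow, range. rewrite !length_map, length_seq. auto.
Qed.

Lemma len_diamond : forall d, length (Hl (fun j => d - j)%nat d) = (d + d * d)%nat.
Proof.
  intros. unfold Hl. rewrite length_app, length_map. unfold range. rewrite length_map, length_seq.
  rewrite length_flat_map.
  rewrite (map_ext _ (fun n => 2 * (0 + d - n) + 1)%nat).
  - rewrite sum_tri. lia.
  - intro. unfold Hrow, range. rewrite !length_map, length_seq. lia.
Qed.

Theorem mainTheorem14 (f : Z -> Z)
  (hf0 : f 0%Z = 1%Z) (hf1 : f 1%Z = 1%Z)
  (hfrec : forall i : Z, f (i + 2)%Z = (f (i + 1)%Z + f i)%Z)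
  (d d1 d2 : nat) :
  (forall x : R, E_single f d x <->
     exists m n : Z, x = IZR m + IZR n * / gamma /\ 0 <= x /\
       (Z.abs m + Z.abs n <= Z.of_nat d)%Z) /\
  (forall x : R, E_pair f d1 d2 x <->
     exists m n : Z, x = IZR m + IZR n * / gamma /\ 0 <= x /\
       (Z.abs m <= Z.of_nat d1)%Z /\ (Z.abs n <= Z.of_nat d2)%Z) /\
  card_is (E_single f d) (d * d + d + 1)%nat /\
  card_is (E_pair f d1 d2) (2 * d1 * d2 + d1 + d2 + 1)%nat.
Proof.
  assert (Hf : fib_like f) by (repeat split; auto).
  assert (A1 : forall x : R, E_single f d x <->
     exists m n : Z, x = IZR m + IZR n * / gamma /\ 0 <= x /\
       (Z.abs m + Z.abs n <= Z.of_nat d)%Z).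
  { intro x. split.
    - intros [_ [l [Hs [Hx Hsum]]]].
      destruct (converse f Hf l) as [M [N [E [HM HN]]]].
      exists M, N. split; [rewrite Hx, E; reflexivity|]. split; [rewrite Hx; apply sum_gpow_nonneg|].
      assert (sum_Z f l = (sum_Z (fun i => f (i - 2)%Z) l + sum_Z (fun i => f (i - 1)%Z) l)%Z).
      { rewrite <- sum_Z_add. apply sum_Z_ext. intro z. rewrite (f_rec f Hf z). lia. }
      lia.
    - intros [m [n [Hx [H0 Hb]]]]. split; [exists m, n; auto|].
      fold psi in Hx. fold (V m n) in Hx.
      destruct (key f Hf m n ltac:(lra)) as [l [Hs [Hl [Ha Hb']]]].
      exists l. split; auto. split; [rewrite Hl; auto|].
      assert (sum_Z f l = (sum_Z (fun i => f (i - 2)%Z) l + sum_Z (fun i => f (i - 1)%Z) l)%Z).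
      { rewrite <- sum_Z_add. apply sum_Z_ext. intro z. rewrite (f_rec f Hf z). lia. }
      lia. }
  assert (A2 : forall x : R, E_pair f d1 d2 x <->
     exists m n : Z, x = IZR m + IZR n * / gamma /\ 0 <= x /\
       (Z.abs m <= Z.of_nat d1)%Z /\ (Z.abs n <= Z.of_nat d2)%Z).
  { intro x. split.
    - intros [_ [l [Hs [Hx [H1 H2]]]]].
      destruct (converse f Hf l) as [M [N [E [HM HN]]]].
      exists M, N. split; [rewrite Hx, E; reflexivity|]. split; [rewrite Hx; apply sum_gpow_nonneg|].
      lia.
    - intros [m [n [Hx [H0 Hb]]]]. split; [exists m, n; auto|].
      fold psi in Hx. fold (V m n) in Hx.
      destruct (key f Hf m n ltac:(lra)) as [l [Hs [Hl [Ha Hb']]]].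
      exists l. split; auto. split; [rewrite Hl; auto|]. lia. }
  split; [exact A1|]. split; [exact A2|]. split.
  - pose proof (generic_card (fun j => d - j)%nat d) as G. rewrite len_diamond in G.
    replace (d * d + d + 1)%nat with (S (d + d * d)) by lia.
    apply (card_is_ext _ _ _ G). intro x. rewrite A1. unfold Region. split.
    + intros [m [n [Hx [H0 [H1 H2]]]]]. exists m, n. unfold V, psi in Hx. repeat split; auto; try lia.
    + intros [m [n [Hx [H0 H1]]]]. exists m, n. unfold V, psi. repeat split; auto; try lia.
  - pose proof (generic_card (fun _ => d1) d2) as G. rewrite len_box in G.
    replace (2 * d1 * d2 + d1 + d2 + 1)%nat with (S (d1 + d2 * (2 * d1 + 1))) by lia.
    apply (card_is_ext _ _ _ G). intro x. rewrite A2. unfold Region. split.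
    + intros [m [n [Hx [H0 [H1 H2]]]]]. exists m, n. unfold V, psi in Hx. repeat split; auto; try lia.
    + intros [m [n [Hx [H0 H1]]]]. exists m, n. unfold V, psi. repeat split; auto; try lia.
Qed.
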